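(* Let $G=(V,E)$ be a tree, $k\ge1$, and $f:E\to\{0,\dots,k\}$ an arbitrary labeling. Choose any orientation of $G$ as a rooted out-tree. Then $f$ is a valid labeling if and only if (1) for every $u\in V$, if $e=(u',u)\in E$ is the edge entering $u$, then $f(e)\notin S(u)$ or $f(e)=0$; and (2) for every $u\in V$ and distinct edges $e,e'\in\delta^+(u)$, the sets $L(e)$ and $L(e')$ are disjoint except possibly for the label $0$, i.e. $L(e)\cap L(e')\subseteq\{0\}$.
   Context: A valid labeling is a function $f:E\to\{0,\dots,k\}$ such that for every pair of distinct edges $e_1,e_2$ with $f(e_1)=f(e_2)>0$ there is an edge $e_3$ on the simple path between $e_1$ and $e_2$ with $f(e_3)>f(e_1)$. In a rooted out-tree, an edge from $u$ to $v$ is written $(u,v)$ and $\delta^+(u)$ is the set of edges leaving $u$. For edges $e,e'$, $e'$ is visible from $e$ if $e'$ lies on a directed path starting with $e$ and ending with $e'$ and no edge $e''$ on this path has $f(e'')>f(e')$. $L(e)$ (visibility sequence of $e$) is the set of labels $f(e')$ of edges $e'$ visible from $e$ (listed in ascending order). For a vertex $u$, $S(u)=\bigcup_{e\in\delta^+(u)}L(e)$. *)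

(* Defs.v *)
From mathcomp Require Import all_boot.
Set Implicit Arguments. Unset Strict Implicit. Unset Printing Implicit Defensive.

Section TreeDefs.
Variables (T : finType) (adj : rel T).

Definition simple_path (x : T) (s : seq T) : bool :=
  path adj x s && uniq (x :: s).

Definition is_tree : Prop :=
  symmetric adj /\ irreflexive adj /\
  (forall x y : T, connect adj x y) /\
  (forall (x : T) (s1 s2 : seq T),
      simple_path x s1 -> simple_path x s2 -> last x s1 = last x s2 -> s1 = s2).

Definition edgeset : {set {set T}} :=
  [set e | [exists x, exists y, adj x y && (e == [set x; y])]].

Definition edges_of (x : T) (s : seq T) : seq {set T} :=
  map (fun p => [set p.1; p.2]) (zip (x :: s) s).

Definition valid_labeling (f : {set T} -> nat) : Prop :=
  forall e1 e2, e1 \in edgeset -> e2 \in edgeset -> e1 != e2 ->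
    f e1 = f e2 -> 0 < f e1 ->
    exists (x : T) (s : seq T),
      [/\ simple_path x s,
          head set0 (edges_of x s) = e1,
          last set0 (edges_of x s) = e2 &
          exists2 e3, e3 \in edges_of x s & f e1 < f e3].

Variable r : T.

(* Orientation as a rooted out-tree with root r: the edge {u,v} is directed
   (u,v) iff u precedes v on the simple path from r to v. *)
Definition down (u v : T) : Prop :=
  adj u v /\ exists p : seq T,
    simple_path r (rcons p v) /\ last r p = u.

Fixpoint dpath (x : T) (s : seq T) : Prop :=
  match s with
  | [::] => True
  | y :: s' => down x y /\ dpath y s'
  end.

Definition out_edge (u : T) (e : {set T}) : Prop :=
  exists v, down u v /\ e = [set u; v].

Variable f : {set T} -> nat.

Definition visible (e e' : {set T}) : Prop :=
  exists (x : T) (s : seq T),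
    [/\ dpath x s, s <> [::],
        head set0 (edges_of x s) = e,
        last set0 (edges_of x s) = e' &
        forall e'', e'' \in edges_of x s -> f e'' <= f e'].

(* L(e), the visibility sequence (as a set of labels). *)
Definition Lvis (e : {set T}) (l : nat) : Prop :=
  exists e', visible e e' /\ f e' = l.

Definition Svis (u : T) (l : nat) : Prop :=
  exists e, out_edge u e /\ Lvis e l.

End TreeDefs.

(* Main.v *)
Require Import Defs.
From mathcomp Require Import all_boot zify.
Set Implicit Arguments. Unset Strict Implicit. Unset Printing Implicit Defensive.

Section Gen.
Variables (T : finType) (adj : rel T).

Lemma edges_cons (x y : T) s : edges_of x (y :: s) = [set x; y] :: edges_of y s.
Proof. by []. Qed.

Lemma edges_nil (x : T) : edges_of x [::] = [::].
Proof. by []. Qed.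

Lemma edges_cat (x : T) p q :
  edges_of x (p ++ q) = edges_of x p ++ edges_of (last x p) q.
Proof. by elim: p x => [//|y p IH x]; rewrite cat_cons !edges_cons IH. Qed.

Lemma edges_rcons (x : T) p y :
  edges_of x (rcons p y) = rcons (edges_of x p) [set last x p; y].
Proof. by rewrite -cats1 edges_cat cats1. Qed.

Lemma mem_edges (x : T) s e : e \in edges_of x s ->
  exists a b, [/\ a \in x :: s, b \in x :: s & e = [set a; b]].
Proof.
elim: s x => [//|y s IH x]; rewrite edges_cons in_cons => /orP [/eqP->|/IH [a [b [Ha Hb ->]]]].
  by exists x, y; rewrite !in_cons !eqxx ?orbT.
by exists a, b; split => //; rewrite in_cons ?Ha ?Hb orbT.
Qed.

Lemma edges_uniq (x : T) s : uniq (x :: s) -> uniq (edges_of x s).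
Proof.
elim: s x => [//|y s IH x] /andP [Hx /andP [Hy Hu]].
rewrite edges_cons cons_uniq IH ?andbT; last by apply/andP; split.
apply/negP => /mem_edges [a [b [Ha Hb Hab]]].
have : x \in [set a; b] by rewrite -Hab set21.
rewrite !inE => /orP [/eqP Exa|/eqP Exb].
  by move: Hx; rewrite Exa Ha.
by move: Hx; rewrite Exb Hb.
Qed.

Lemma edges_in_set (x : T) s e : path adj x s -> e \in edges_of x s -> e \in edgeset adj.
Proof.
elim: s x => [//|y s IH x] /andP [Hxy Hp]; rewrite edges_cons in_cons => /orP [/eqP->|/IH];
  last by apply.
by rewrite inE; apply/existsP; exists x; apply/existsP; exists y; rewrite Hxy eqxx.
Qed.

Lemma last_rev_belast (y : T) s : last (last y s) (rev (belast y s)) = y.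
Proof. by case: s => //= z s; rewrite rev_cons last_rcons. Qed.

Lemma edges_rev (x : T) s :
  edges_of (last x s) (rev (belast x s)) = rev (edges_of x s).
Proof.
elim: s x => [//|y s IH x].
rewrite /= rev_cons edges_rcons IH last_rev_belast rev_cons; congr rcons.
by rewrite setUC.
Qed.

Lemma head_rev (U : Type) (d : U) s : head d (rev s) = last d s.
Proof. by case/lastP: s => // s z; rewrite rev_rcons last_rcons. Qed.

Lemma last_rev (U : Type) (d : U) s : last d (rev s) = head d s.
Proof. by case: s => // z s; rewrite rev_cons last_rcons. Qed.

Lemma last_ne (U : Type) (d d' : U) s : s <> [::] -> last d s = last d' s.
Proof. by case: s. Qed.

Lemma head_ne (U : Type) (d d' : U) s : s <> [::] -> head d s = head d' s.
Proof. by case: s. Qed.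

Lemma last_in (U : eqType) (d : U) s : s <> [::] -> last d s \in s.
Proof. by case: s => // a s _; exact: (mem_last a s). Qed.

Lemma simple_cat (x : T) p q : simple_path adj x (p ++ q) ->
  simple_path adj x p /\ simple_path adj (last x p) q.
Proof.
rewrite /simple_path cat_path -cat_cons cat_uniq => /andP [/andP [H1 H2] /and3P [U1 U2 U3]].
split; first by rewrite H1 U1.
rewrite H2 /= U3 andbT; apply/negP => Hl.
by move: U2 => /hasP; apply; exists (last x p) => //; apply: mem_last.
Qed.

Lemma simple_rev (x : T) s : symmetric adj -> simple_path adj x s ->
  simple_path adj (last x s) (rev (belast x s)).
Proof.
move=> Hsym /andP [Hp Hu]; rewrite /simple_path rev_path.
have E : (fun z => adj^~ z) =2 adj by move=> a b; rewrite /= Hsym.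
rewrite (eq_path E).
by rewrite Hp -rev_rcons -lastI rev_uniq.
Qed.

Lemma set2_eq (x y a b : T) : [set x; y] = [set a; b] ->
  (x = a /\ y = b) \/ (x = b /\ y = a).
Proof.
move=> H.
have Hx : x \in [set a; b] by rewrite -H set21.
have Hy : y \in [set a; b] by rewrite -H set22.
have Ha : a \in [set x; y] by rewrite H set21.
have Hb : b \in [set x; y] by rewrite H set22.
move: Hx Hy Ha Hb; rewrite !inE.
case/orP => /eqP Ex; case/orP => /eqP Ey; subst => //; try by [left|right].
all: rewrite ?orbb => H1 H2.
all: try by (move/eqP: H1 => H1; subst; left).
all: try by (move/eqP: H2 => H2; subst; left).
Qed.

End Gen.

Section Tree.
Variables (T : finType) (adj : rel T) (r : T).
Hypothesis Htree : is_tree adj.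

Let Hsym : symmetric adj. Proof. by case: Htree. Qed.
Let Hirr : irreflexive adj. Proof. by case: Htree => _ []. Qed.
Let Hconn : forall x y, connect adj x y. Proof. by case: Htree => _ [_ []]. Qed.
Let Hun : forall (x : T) (s1 s2 : seq T),
      simple_path adj x s1 -> simple_path adj x s2 -> last x s1 = last x s2 -> s1 = s2.
Proof. by case: Htree => _ [_ []]. Qed.

Lemma exR v : exists s, simple_path adj r s && (last r s == v).
Proof.
have /connectP [p Hp ->] := Hconn r v.
case: (shortenP Hp) => p' H1 H2 _; exists p'.
by rewrite /simple_path H1 H2 eqxx.
Qed.

Definition R v := xchoose (exR v).

Lemma R_simple v : simple_path adj r (R v).
Proof. by have /andP [] := xchooseP (exR v). Qed.

Lemma R_last v : last r (R v) = v.
Proof. by have /andP [_ /eqP] := xchooseP (exR v). Qed.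

Lemma R_uniq p : simple_path adj r p -> R (last r p) = p.
Proof. by move=> Hp; apply: Hun; [apply: R_simple | exact: Hp | rewrite R_last]. Qed.

Lemma R_r : R r = [::].
Proof. by have := R_uniq (p := [::]) (erefl true). Qed.

Lemma down_R u v : down adj r u v <-> R v = rcons (R u) v.
Proof.
rewrite /down; split.
  move=> [Ha [p [Hs Hl]]].
  have E := R_uniq Hs; rewrite last_rcons in E; rewrite E.
  move: Hs; rewrite -cats1 => /simple_cat [Hp _].
  by rewrite cats1 -Hl (R_uniq Hp).
move=> E; split; last by exists (R u); rewrite -E R_simple R_last.
have /andP [] := R_simple v; rewrite E rcons_path => /andP [_].
by rewrite R_last.
Qed.

Lemma dpath_R x s : dpath adj r x s <-> simple_path adj r (R x ++ s).
Proof.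
elim: s x => [|y s IH] x /=; first by rewrite cats0; split => // _; apply: R_simple.
split.
  by move=> [/down_R Hd /IH]; rewrite Hd cat_rcons.
rewrite -cat_rcons => H; have [H1 _] := simple_cat H.
have Hd : R y = rcons (R x) y by rewrite -(R_uniq H1) last_rcons.
by split; [apply/down_R | apply/IH; rewrite Hd].
Qed.

Lemma dpath_simple x s : dpath adj r x s -> simple_path adj x s.
Proof. by move/dpath_R/simple_cat => [_]; rewrite R_last. Qed.

Lemma down_antisym u v : down adj r u v -> down adj r v u -> False.
Proof.
move=> /down_R H1 /down_R H2.
have := congr1 size H1; rewrite H2 !size_rcons => /eqP.
by rewrite -[X in X == _]addn0 -addn2 eqn_add2l.
Qed.

Lemma down_parent u u' v : down adj r u v -> down adj r u' v -> u = u'.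
Proof.
move=> /down_R H1 /down_R H2; rewrite H1 in H2.
by case: (rcons_inj H2) => E; rewrite -(R_last u) E R_last.
Qed.

Lemma R_prefix w u : w \in r :: R u -> exists q, R u = R w ++ q.
Proof.
rewrite in_cons => /orP [/eqP ->|Hw]; first by exists (R u); rewrite R_r.
case/splitPr: Hw (R_simple u) => p1 p2.
rewrite -cat_rcons => H; have [H1 _] := simple_cat H.
by exists p2; rewrite -(R_uniq H1) last_rcons.
Qed.

Lemma adj_down_aux u v : adj u v -> v \notin r :: R u -> down adj r u v.
Proof.
move=> Ha Hv; apply/down_R; rewrite -{1}(last_rcons r (R u) v).
apply: R_uniq; have /andP [Hp Hu] := R_simple u.
by rewrite /simple_path rcons_path Hp R_last Ha -rcons_cons rcons_uniq Hv Hu.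
Qed.

Lemma adj_down u v : adj u v -> down adj r u v \/ down adj r v u.
Proof.
move=> Ha.
case Hv: (v \in r :: R u); last by left; apply: adj_down_aux => //; rewrite Hv.
case Hu: (u \in r :: R v); last by right; apply: adj_down_aux; [rewrite Hsym | rewrite Hu].
have [q1 E1] := R_prefix Hv; have [q2 E2] := R_prefix Hu.
have := congr1 size E1; rewrite E2 !size_cat => Hs.
have /size0nil Eq : size q1 = 0 by lia.
rewrite Eq cats0 in E1.
have Euv : u = v by rewrite -(R_last u) E1 R_last.
by rewrite Euv Hirr in Ha.
Qed.

Lemma head_cons (U : Type) (d a : U) l : head d (a :: l) = a. Proof. by []. Qed.
Lemma last_cons (U : Type) (d a : U) l : last d (a :: l) = last a l. Proof. by []. Qed.
Lemma last_cons_rcons (U : Type) (d a b : U) l : last d (a :: rcons l b) = b.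
Proof. by rewrite -rcons_cons last_rcons. Qed.
Lemma head_cat_ne (U : Type) (d : U) s1 s2 : s1 <> [::] -> head d (s1 ++ s2) = head d s1.
Proof. by case: s1. Qed.

Lemma key x s y t : simple_path adj x s -> simple_path adj y t ->
  head set0 (edges_of x s) = head set0 (edges_of y t) ->
  last set0 (edges_of x s) = last set0 (edges_of y t) ->
  head set0 (edges_of x s) != last set0 (edges_of x s) -> y = x /\ t = s.
Proof.
case/lastP: s => [|s0 z]; first by rewrite eqxx.
case: s0 => [|x1 s1]; first by rewrite /= eqxx.
case/lastP: t => [|t0 w].
  move=> _ _; rewrite rcons_cons edges_cons head_cons => Hh.
  by have := set21 x x1; rewrite Hh inE.
case: t0 => [|y1 t1].
  by move=> _ _ -> ->; rewrite /= eqxx.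
rewrite !rcons_cons !edges_cons !edges_rcons !head_cons !last_cons_rcons.
move=> Hs Ht Hh Hl _.
case: (set2_eq Hh) => [[Ey Ey1]|[Ey Ey1]]; subst y y1.
  case: (set2_eq Hl) => [[Ez' Ez]|[Ez' Ez]].
    subst w; split => //; apply: (Hun (x := x)) => //.
    by rewrite !last_cons_rcons.
  have Hs' := Hs; rewrite -rcons_cons -cats1 in Hs'; have [Hp _] := simple_cat Hs'.
  have E : x1 :: s1 = x1 :: rcons t1 w.
    by apply: (Hun (x := x)) => //; rewrite last_cons_rcons.
  case/andP: Hs => _; rewrite -!rcons_cons rcons_uniq => /andP [Hz _].
  have sub : {subset x1 :: t1 <= x :: x1 :: rcons t1 w}.
    by move=> a; rewrite !in_cons mem_rcons in_cons => /orP [->|->]; rewrite !orbT.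
  by move: Hz; rewrite E Ez (sub _ (mem_last _ _)).
have Hs' := Hs; rewrite -cat1s in Hs'; have [_ Hs1] := simple_cat Hs'.
have Ht' := Ht; rewrite -cat1s in Ht'; have [_ Ht1] := simple_cat Ht'.
case: (set2_eq Hl) => [[Ez' Ez]|[Ez' Ez]].
  subst w; have E : rcons s1 z = x :: rcons t1 z.
    by apply: (Hun (x := x1)) => //; rewrite last_cons_rcons last_rcons.
  case/andP: Hs => _ /andP [Hx _]; move: Hx.
  by rewrite E !in_cons eqxx !orbT.
have Hs2 := Hs; rewrite -rcons_cons -cats1 in Hs2; have [Hp _] := simple_cat Hs2.
have E : x1 :: s1 = rcons t1 w.
  by apply: (Hun (x := x)) => //=; rewrite last_rcons.
case/andP: Ht => _ /andP [Hx _]; move: Hx.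
by rewrite -E !in_cons eqxx !orbT.
Qed.

Definition Gp (f : {set T} -> nat) e1 e2 :=
  exists (x : T) (s : seq T),
      [/\ simple_path adj x s,
          head set0 (edges_of x s) = e1,
          last set0 (edges_of x s) = e2 &
          exists2 e3, e3 \in edges_of x s & f e1 < f e3].

Lemma G_sym f e1 e2 : f e1 = f e2 -> Gp f e1 e2 -> Gp f e2 e1.
Proof.
move=> Ef [x [s [Hs Hh Hl [e3 He3 Hf]]]].
exists (last x s), (rev (belast x s)); rewrite edges_rev head_rev last_rev.
split => //; first exact: simple_rev.
by exists e3; rewrite ?mem_rev // -Ef.
Qed.

Lemma dpath_head w c s z : dpath adj r w (c :: s) -> z \in c :: s ->
  exists q, R z = R w ++ c :: q.
Proof.
move/dpath_R => H Hz.
have [p1 [p2 E]] : exists p1 p2, c :: s = p1 ++ z :: p2.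
  by case/splitPr: Hz => p1 p2; exists p1, p2.
rewrite E -cat_rcons catA in H; have [H1 _] := simple_cat H.
have Rz := R_uniq H1; rewrite last_cat last_rcons in Rz.
clear H H1; case: p1 E Rz => [|a p1] /= [-> _] ->; first by exists [::].
by exists (rcons p1 z).
Qed.

Lemma join w c1 B1 c2 B2 : dpath adj r w (c1 :: B1) -> dpath adj r w (c2 :: B2) ->
  c1 != c2 -> exists x t, simple_path adj x t /\
  edges_of x t = rev (edges_of w (c1 :: B1)) ++ edges_of w (c2 :: B2).
Proof.
move=> D1 D2 Hc.
exists (last w (c1 :: B1)), (rev (belast w (c1 :: B1)) ++ c2 :: B2).
split; last by rewrite edges_cat edges_rev last_rev_belast.
have /andP [P1 U1] := simple_rev Hsym (dpath_simple D1).
have /andP [P2 U2] := dpath_simple D2.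
apply/andP; split; first by rewrite cat_path P1 last_rev_belast P2.
have E : last w (c1 :: B1) :: rev (belast w (c1 :: B1)) = rev (w :: c1 :: B1).
  by rewrite [w :: _]lastI rev_rcons.
have U1' : uniq (w :: c1 :: B1) by rewrite -rev_uniq -E.
have Hw : w \notin c2 :: B2 by case/andP: U2.
have U2' : uniq (c2 :: B2) by case/andP: U2.
rewrite -cat_cons E cat_uniq rev_uniq U1' U2' andbT andTb.
apply/hasPn => z Hz; rewrite mem_rev in_cons; apply/negP => /orP [/eqP Ezw|Hz1].
  by move: Hw; rewrite -Ezw Hz.
have [q1 E1] := dpath_head D1 Hz1; have [q2 E2] := dpath_head D2 Hz.
have := congr1 (drop (size (R w))) (etrans (esym E1) E2).
by rewrite !drop_size_cat // => [[Ec _]]; rewrite Ec eqxx in Hc.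
Qed.

Lemma vis_orient f u v e' : down adj r u v -> visible adj r f [set u; v] e' ->
  exists s, [/\ dpath adj r u (v :: s), last set0 (edges_of u (v :: s)) = e' &
     forall e'', e'' \in edges_of u (v :: s) -> f e'' <= f e'].
Proof.
move=> Hd [x [s [Hp Hne Hh Hl Hle]]].
case: s Hp Hne Hh Hl Hle => [//|y s] [Hxy Hp] _ Hh Hl Hle.
rewrite edges_cons head_cons in Hh.
case: (set2_eq Hh) => [[Ex Ey]|[Ex Ey]]; subst.
  by exists s; split.
by case: (down_antisym Hd Hxy).
Qed.

Lemma edge_orient e : e \in edgeset adj -> exists a b, down adj r a b /\ e = [set a; b].
Proof.
rewrite inE => /existsP [x /existsP [y /andP [Ha /eqP ->]]].
case: (adj_down Ha) => Hd; first by exists x, y.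
by exists y, x; rewrite setUC.
Qed.

Fixpoint lcp (s t : seq T) : seq T :=
  match s, t with
  | x :: s', y :: t' => if x == y then x :: lcp s' t' else [::]
  | _, _ => [::]
  end.

Lemma lcp_spec (s t : seq T) : exists C d1 d2, [/\ s = C ++ d1, t = C ++ d2 &
   forall a b s' t', d1 = a :: s' -> d2 = b :: t' -> a != b].
Proof.
elim: s t => [|x s IH] [|y t].
- by exists [::], [::], [::].
- by exists [::], [::], (y :: t).
- by exists [::], (x :: s), [::].
case Exy: (x == y).
  have [C [d1 [d2 [E1 E2 Hd]]]] := IH t.
  exists (x :: C), d1, d2; split => //; first by rewrite E1.
  by rewrite (eqP Exy) E2.
exists [::], (x :: s), (y :: t); split => // a b s' t' [<- _] [<- _].
by rewrite Exy.
Qed.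

Lemma last_edges_R a b : down adj r a b -> last set0 (edges_of r (R b)) = [set a; b].
Proof. by move/down_R => ->; rewrite edges_rcons last_rcons R_last. Qed.

Lemma caseA (f : {set T} -> nat) a1 b1 a2 b2 d :
  (forall u u' : T, down adj r u' u ->
       ~ Svis adj r f u (f [set u'; u]) \/ f [set u'; u] = 0) ->
  down adj r a1 b1 -> down adj r a2 b2 -> [set a1; b1] != [set a2; b2] ->
  f [set a1; b1] = f [set a2; b2] -> 0 < f [set a1; b1] ->
  R b2 = R b1 ++ d -> Gp f [set a1; b1] [set a2; b2].
Proof.
move=> H1 Hd1 Hd2 Hne Hfe Hpos.
case: d => [|c d'] E.
  rewrite cats0 in E.
  have Eb : b2 = b1 by rewrite -(R_last b2) E R_last.
  subst b2; have Ea := down_parent Hd1 Hd2; subst a2.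
  by rewrite eqxx in Hne.
have D : dpath adj r b1 (c :: d') by apply/dpath_R; rewrite -E R_simple.
have DQ : dpath adj r a1 (b1 :: c :: d') by split.
have SQ := dpath_simple DQ.
have Hl' : last set0 (edges_of b1 (c :: d')) = [set a2; b2].
  rewrite -(last_edges_R Hd2) E edges_cat last_cat R_last.
  by apply: last_ne; rewrite edges_cons.
have Hl : last set0 (edges_of a1 (b1 :: c :: d')) = [set a2; b2].
  rewrite edges_cons last_cons -Hl'; apply: last_ne; by rewrite edges_cons.
case Hb: (has (fun e => f [set a1; b1] < f e) (edges_of a1 (b1 :: c :: d'))).
  case/hasP: Hb => e3 He3 Hf3.
  by exists a1, (b1 :: c :: d'); split => //; exists e3.
have Hall : forall e, e \in edges_of a1 (b1 :: c :: d') -> f e <= f [set a1; b1].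
  by move=> e He; have := hasPn (negbT Hb) e He; rewrite -leqNgt.
case: (H1 b1 a1 Hd1) => [HS|H0]; last by rewrite H0 in Hpos.
exfalso; apply: HS; exists [set b1; c]; split; first by exists c; split => //; case: D.
exists [set a2; b2]; split; last by rewrite Hfe.
exists b1, (c :: d'); split => //.
move=> e'' He''; rewrite -Hfe; apply: Hall.
by rewrite edges_cons in_cons He'' orbT.
Qed.

Lemma caseB (f : {set T} -> nat) a1 b1 a2 b2 C c1 B1 c2 B2 :
  (forall (u : T) (e e' : {set T}),
       out_edge adj r u e -> out_edge adj r u e' -> e <> e' ->
       forall l, Lvis adj r f e l -> Lvis adj r f e' l -> l = 0) ->
  down adj r a1 b1 -> down adj r a2 b2 ->
  f [set a1; b1] = f [set a2; b2] -> 0 < f [set a1; b1] ->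
  R b1 = C ++ c1 :: B1 -> R b2 = C ++ c2 :: B2 -> c1 != c2 ->
  Gp f [set a1; b1] [set a2; b2].
Proof.
move=> H2 Hd1 Hd2 Hfe Hpos E1 E2 Hc.
set w := last r C.
have RW : R w = C.
  by have := R_simple b1; rewrite E1 => /simple_cat [/R_uniq].
have D1 : dpath adj r w (c1 :: B1) by apply/dpath_R; rewrite RW -E1 R_simple.
have D2 : dpath adj r w (c2 :: B2) by apply/dpath_R; rewrite RW -E2 R_simple.
have Hl1 : last set0 (edges_of w (c1 :: B1)) = [set a1; b1].
  rewrite -(last_edges_R Hd1) E1 edges_cat last_cat.
  by apply: last_ne; rewrite edges_cons.
have Hl2 : last set0 (edges_of w (c2 :: B2)) = [set a2; b2].
  rewrite -(last_edges_R Hd2) E2 edges_cat last_cat.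
  by apply: last_ne; rewrite edges_cons.
have [x [t [St Et]]] := join D1 D2 Hc.
have Hh : head set0 (edges_of x t) = [set a1; b1].
  rewrite Et head_cat_ne ?head_rev // edges_cons rev_cons.
  by case: (rev _).
have Hl : last set0 (edges_of x t) = [set a2; b2].
  by rewrite Et last_cat -Hl2; apply: last_ne; rewrite edges_cons.
case Hb: (has (fun e => f [set a1; b1] < f e) (edges_of x t)).
  case/hasP: Hb => e3 He3 Hf3.
  by exists x, t; split => //; exists e3.
have Hall : forall e, e \in edges_of x t -> f e <= f [set a1; b1].
  by move=> e He; have := hasPn (negbT Hb) e He; rewrite -leqNgt.
have := H2 w [set w; c1] [set w; c2].
have Ho1 : out_edge adj r w [set w; c1] by exists c1; split => //; case: D1.
have Ho2 : out_edge adj r w [set w; c2] by exists c2; split => //; case: D2.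
move=> /(_ Ho1 Ho2) H.
have Hne : [set w; c1] <> [set w; c2].
  by move=> /set2_eq [[_ Ec]|[Ew Ec]]; [rewrite Ec eqxx in Hc | rewrite Ec Ew eqxx in Hc].
have := H Hne (f [set a1; b1]).
have L1 : Lvis adj r f [set w; c1] (f [set a1; b1]).
  exists [set a1; b1]; split => //.
  exists w, (c1 :: B1); split => // e'' He''; apply: Hall.
  by rewrite Et mem_cat mem_rev He''.
have L2 : Lvis adj r f [set w; c2] (f [set a1; b1]).
  exists [set a2; b2]; split => //.
  exists w, (c2 :: B2); split => // e'' He''; rewrite -Hfe; apply: Hall.
  by rewrite Et mem_cat He'' orbT.
by move=> /(_ L1 L2) H0; rewrite H0 in Hpos.
Qed.

End Tree.

Unset Implicit Arguments.

Theorem proposition4p2 (T : finType) (adj : rel T) (k : nat)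
    (f : {set T} -> nat) (r : T) :
  is_tree adj -> 1 <= k ->
  (forall e, e \in edgeset adj -> f e <= k) ->
  (valid_labeling adj f <->
   ((forall u u' : T, down adj r u' u ->
       ~ Svis adj r f u (f [set u'; u]) \/ f [set u'; u] = 0) /\
    (forall (u : T) (e e' : {set T}),
       out_edge adj r u e -> out_edge adj r u e' -> e <> e' ->
       forall l, Lvis adj r f e l -> Lvis adj r f e' l -> l = 0))).
Proof.
move=> Htree Hk Hbound.
split.
- move=> Hval; split.
  + move=> u u' Hdu.
    case E0: (f [set u'; u] == 0); first by right; apply/eqP.
    left; move=> [e [[v [Hdv ->]] [e' [Hvis Hfe]]]].
    have [s [D Hl Hle]] := vis_orient Htree Hdv Hvis.
    have DQ : dpath adj r u' (u :: v :: s) by split.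
    have SQ := dpath_simple Htree DQ.
    have /andP [PQ UQ] := SQ.
    have UE := edges_uniq UQ.
    rewrite edges_cons cons_uniq in UE; case/andP: UE => Hnot _.
    have He' : e' \in edges_of u (v :: s).
      by rewrite -Hl; apply: last_in; rewrite edges_cons.
    have Hne : [set u'; u] != e' by apply/eqP => E; move: Hnot; rewrite E He'.
    have Hin1 : [set u'; u] \in edgeset adj.
      by apply: (edges_in_set PQ); rewrite edges_cons mem_head.
    have Hin2 : e' \in edgeset adj.
      by apply: (edges_in_set PQ); rewrite edges_cons in_cons He' orbT.
    have Hp : 0 < f [set u'; u] by rewrite lt0n E0.
    have [x2 [s2 [S2 H2 L2 [e3 He3 Hf3]]]] := Hval _ _ Hin1 Hin2 Hne (esym Hfe) Hp.
    have HlQ : last set0 (edges_of u' (u :: v :: s)) = e'.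
      by rewrite edges_cons last_cons -Hl; apply: last_ne; rewrite edges_cons.
    have HhQ : head set0 (edges_of u' (u :: v :: s)) = [set u'; u] by [].
    have HnQ : head set0 (edges_of u' (u :: v :: s)) != last set0 (edges_of u' (u :: v :: s)).
      by rewrite HhQ HlQ.
    have [Ex Et] := key Htree SQ S2 (etrans HhQ (esym H2)) (etrans HlQ (esym L2)) HnQ.
    subst x2 s2; move: He3; rewrite edges_cons in_cons => /orP [/eqP E3|He3].
      by rewrite E3 ltnn in Hf3.
    by have := Hle _ He3; rewrite Hfe leqNgt Hf3.
  + move=> u e e' [v [Hdv ->]] [v' [Hdv' ->]] Hneq l [g [Hvis Hfg]] [g' [Hvis' Hfg']].
    case El: (l == 0); first by apply/eqP.
    exfalso.
    have [s [D Hl Hle]] := vis_orient Htree Hdv Hvis.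
    have [s' [D' Hl' Hle']] := vis_orient Htree Hdv' Hvis'.
    have Hvv : v != v' by apply/eqP => E; apply: Hneq; rewrite E.
    have [x [t [St Et]]] := join Htree D D' Hvv.
    have /andP [Pt Ut] := St.
    have UE := edges_uniq Ut; rewrite Et cat_uniq in UE.
    case/and3P: UE => _ Hdis _.
    have Hg : g \in rev (edges_of u (v :: s)).
      by rewrite mem_rev -Hl; apply: last_in; rewrite edges_cons.
    have Hg' : g' \in edges_of u (v' :: s').
      by rewrite -Hl'; apply: last_in; rewrite edges_cons.
    have Hne : g != g'.
      by apply/eqP => E; move/hasPn: Hdis => /(_ g' Hg'); rewrite -E Hg.
    have Hin1 : g \in edgeset adj by apply: (edges_in_set Pt); rewrite Et mem_cat Hg.
    have Hin2 : g' \in edgeset adj by apply: (edges_in_set Pt); rewrite Et mem_cat Hg' orbT.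
    have Hp : 0 < f g by rewrite Hfg lt0n El.
    have [x2 [s2 [S2 H2 L2 [e3 He3 Hf3]]]] :=
      Hval _ _ Hin1 Hin2 Hne (etrans Hfg (esym Hfg')) Hp.
    have HhQ : head set0 (edges_of x t) = g.
      rewrite Et head_cat_ne; first by rewrite head_rev.
      by rewrite edges_cons rev_cons; case: (rev _).
    have HlQ : last set0 (edges_of x t) = g'.
      by rewrite Et last_cat -Hl'; apply: last_ne; rewrite edges_cons.
    have HnQ : head set0 (edges_of x t) != last set0 (edges_of x t) by rewrite HhQ HlQ.
    have [Ex Et2] := key Htree St S2 (etrans HhQ (esym H2)) (etrans HlQ (esym L2)) HnQ.
    subst x2 s2; move: He3; rewrite Et mem_cat mem_rev => /orP [H|H].
      by have := Hle _ H; rewrite leqNgt Hf3.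
    by have := Hle' _ H; rewrite Hfg' -Hfg leqNgt Hf3.
- move=> [H1 H2] e1 e2 He1 He2 Hne Hfe Hpos.
  have [a1 [b1 [Hd1 E1]]] := edge_orient r Htree He1.
  have [a2 [b2 [Hd2 E2]]] := edge_orient r Htree He2.
  subst e1 e2.
  have [C [d1 [d2 [F1 F2 Hd]]]] := lcp_spec (R r Htree b1) (R r Htree b2).
  case: d1 F1 Hd => [|c1 B1] F1 Hd.
    rewrite cats0 in F1.
    by apply: (caseA (Htree := Htree) H1 Hd1 Hd2 Hne Hfe Hpos (d := d2)); rewrite F2 F1.
  case: d2 F2 Hd => [|c2 B2] F2 Hd.
    rewrite cats0 in F2.
    apply: (G_sym Htree (esym Hfe)).
    apply: (caseA (Htree := Htree) H1 Hd2 Hd1 _ (esym Hfe) _ (d := c1 :: B1)).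
    - by rewrite eq_sym.
    - by rewrite -Hfe.
    - by rewrite F1 F2.
  apply: (caseB (Htree := Htree) H2 Hd1 Hd2 Hfe Hpos F1 F2).
  exact: (Hd _ _ _ _ (erefl _) (erefl _)).
Qed.
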